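(* Let $G$ be a finite simple graph on $[d]$ and $<$ a monomial order on $R[G]$. Let $\mathcal{G}_1$ be the reduced Gröbner basis of $J_G$ with respect to $<$, and let $\mathcal{G}_2=\{x_Sx_T : S,T\in S(G),\ S\cap T\neq\emptyset\}$. Then $\mathcal{G}=(\mathcal{G}_1\setminus M_G)\cup\mathcal{G}_2$ is the reduced Gröbner basis of $K_G$ with respect to $<$.
   Context: A stable set of $G$ is a subset of $[d]$ with no edge of $G$ (including $\emptyset$ and singletons); $S(G)$ is the set of stable sets; $R[G]=\mathbb{K}[x_S : S\in S(G)]$ over a field $\mathbb{K}$, all variables of degree $1$. $J_G$ is the ideal generated by all $x_{S_1}x_{S_2}-x_{S_3}x_{S_4}$ with $S_i\in S(G)$, $S_1\cap S_2=S_3\cap S_4=\emptyset$, $S_1\cup S_2=S_3\cup S_4$ (the binomials ${\bf x}_f-{\bf x}_g$ for $2$-colorings $f,g$ of a common induced subgraph). $M_G=\langle x_Sx_T : S,T\in S(G),\ S\cap T\neq\emptyset\rangle$ and $K_G=J_G+M_G$. A Gröbner basis of $I$ w.r.t. $<$ is a finite subset of $I$ whose leading monomials generate the initial ideal ${\rm in}_<(I)$; it is reduced if all leading coefficients are $1$ and no monomial of any element lies in the ideal generated by the leading monomials of the other elements. *)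

(* Defs.v *)
From HB Require Import structures.
From mathcomp Require Import all_boot all_order all_algebra.
From mathcomp Require Export mpoly.
Set Implicit Arguments.
Unset Strict Implicit.
Unset Printing Implicit Defensive.
Import GRing.Theory.
Local Open Scope ring_scope.

Definition simple_graph (d : nat) (E : rel 'I_d) : Prop :=
  irreflexive E /\ ssrbool.symmetric E.

Definition stableb (d : nat) (E : rel 'I_d) (S : {set 'I_d}) : bool :=
  [forall x in S, forall y in S, ~~ E x y].

Definition stset (d : nat) (E : rel 'I_d) := {S : {set 'I_d} | stableb E S}.

Definition nvar (d : nat) (E : rel 'I_d) : nat := #|{: stset E}|.

(* The polynomial ring R[G] = K[x_S : S in S(G)], variables indexed through
   an enumeration of S(G). *)
Definition RG (K : fieldType) (d : nat) (E : rel 'I_d) := {mpoly K[nvar E]}.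

Definition xS (K : fieldType) (d : nat) (E : rel 'I_d) (S : stset E) : RG K E :=
  'X_(enum_rank S).
Arguments xS K {d E} S.

Definition ideal_gen (n : nat) (K : fieldType) (P : {mpoly K[n]} -> Prop)
  : {mpoly K[n]} -> Prop :=
  fun f => exists l : seq ({mpoly K[n]} * {mpoly K[n]}),
    (forall cg, cg \in l -> P cg.2) /\ f = \sum_(cg <- l) cg.1 * cg.2.

Definition ideal_sum (n : nat) (K : fieldType) (I J : {mpoly K[n]} -> Prop)
  : {mpoly K[n]} -> Prop :=
  fun f => exists g h, I g /\ J h /\ f = g + h.

Definition J_gens (K : fieldType) (d : nat) (E : rel 'I_d) : RG K E -> Prop :=
  fun f => exists S1 S2 S3 S4 : stset E,
    [/\ val S1 :&: val S2 = set0, val S3 :&: val S4 = set0,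
        val S1 :|: val S2 = val S3 :|: val S4 &
        f = xS K S1 * xS K S2 - xS K S3 * xS K S4].
Arguments J_gens K {d} E _.

Definition J_G (K : fieldType) (d : nat) (E : rel 'I_d) : RG K E -> Prop :=
  ideal_gen (J_gens K E).
Arguments J_G K {d} E _.

Definition M_gens (K : fieldType) (d : nat) (E : rel 'I_d) : RG K E -> Prop :=
  fun f => exists S T : stset E, val S :&: val T != set0 /\ f = xS K S * xS K T.
Arguments M_gens K {d} E _.

Definition M_G (K : fieldType) (d : nat) (E : rel 'I_d) : RG K E -> Prop :=
  ideal_gen (M_gens K E).
Arguments M_G K {d} E _.

Definition K_G (K : fieldType) (d : nat) (E : rel 'I_d) : RG K E -> Prop :=
  ideal_sum (J_G K E) (M_G K E).
Arguments K_G K {d} E _.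

Definition monomial_order (n : nat) (le : rel 'X_{1..n}) : Prop :=
  [/\ reflexive le, antisymmetric le, transitive le & total le] /\
  (forall m1 m2 m, le m1 m2 -> le (m1 + m)%MM (m2 + m)%MM) /\
  well_founded (fun a b => le a b && (a != b)).

(* Leading monomial: the le-maximum of the support (0 for the zero poly). *)
Definition lmon (n : nat) (K : fieldType) (le : rel 'X_{1..n}) (p : {mpoly K[n]})
  : 'X_{1..n} :=
  let s := msupp p in
  foldr (fun m acc => if le acc m then m else acc) (head 0%MM s) (behead s).

Definition lcoef (n : nat) (K : fieldType) (le : rel 'X_{1..n}) (p : {mpoly K[n]}) : K :=
  p@_(lmon le p).

Definition lead_ideal (n : nat) (K : fieldType) (le : rel 'X_{1..n})
  (P : {mpoly K[n]} -> Prop) : {mpoly K[n]} -> Prop :=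
  ideal_gen (fun u => exists f, P f /\ f != 0 /\ u = 'X_[lmon le f]).

Definition init_ideal (n : nat) (K : fieldType) (le : rel 'X_{1..n})
  (I : {mpoly K[n]} -> Prop) : {mpoly K[n]} -> Prop := lead_ideal le I.

Definition finite_set (n : nat) (K : fieldType) (B : {mpoly K[n]} -> Prop) : Prop :=
  exists s : seq {mpoly K[n]}, forall f, B f <-> f \in s.

Definition groebner_basis (n : nat) (K : fieldType) (le : rel 'X_{1..n})
  (I B : {mpoly K[n]} -> Prop) : Prop :=
  [/\ finite_set B, (forall g, B g -> I g) &
      (forall f, lead_ideal le B f <-> init_ideal le I f)].

Definition reduced_groebner_basis (n : nat) (K : fieldType) (le : rel 'X_{1..n})
  (I B : {mpoly K[n]} -> Prop) : Prop :=
  [/\ groebner_basis le I B,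
      (forall g, B g -> lcoef le g = 1) &
      (forall g, B g -> forall m, m \in msupp g ->
         ~ lead_ideal le (fun h => B h /\ h <> g) 'X_[m])].

(* Main.v *)
Require Import Defs.
From mathcomp Require Import all_boot all_order all_algebra.
From mathcomp Require Import mpoly.
Local Open Scope ring_scope.

Set Implicit Arguments. Unset Strict Implicit. Unset Printing Implicit Defensive.
Import GRing.Theory.

Section Gen.
Variables (n : nat) (K : fieldType).
Implicit Types (f g h p q : {mpoly K[n]}) (P Q : {mpoly K[n]} -> Prop).

Lemma ig0 P : ideal_gen P 0.
Proof. by exists [::]; split => //; rewrite big_nil. Qed.

Lemma igD P f g : ideal_gen P f -> ideal_gen P g -> ideal_gen P (f + g).
Proof.
move=> [l1 [h1 ->]] [l2 [h2 ->]]; exists (l1 ++ l2); split.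
  by move=> cg; rewrite mem_cat => /orP[/h1|/h2].
by rewrite big_cat.
Qed.

Lemma igM P c f : ideal_gen P f -> ideal_gen P (c * f).
Proof.
move=> [l [h ->]]; exists [seq (c * cg.1, cg.2) | cg <- l]; split.
  move=> cg /mapP [x xl ->] /=; exact: h.
by rewrite big_map mulr_sumr; apply: eq_bigr => x _; rewrite mulrA.
Qed.

Lemma igB P f g : ideal_gen P f -> ideal_gen P g -> ideal_gen P (f - g).
Proof. by move=> hf hg; apply: igD => //; rewrite -mulN1r; apply: igM. Qed.

Lemma igG P f : P f -> ideal_gen P f.
Proof.
move=> hf; exists [:: (1, f)]; split; first by move=> cg; rewrite inE => /eqP ->.
by rewrite big_seq1 mul1r.
Qed.

Lemma igsum P (T : eqType) (s : seq T) (F : T -> {mpoly K[n]}) :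
  (forall x, x \in s -> ideal_gen P (F x)) -> ideal_gen P (\sum_(x <- s) F x).
Proof.
elim: s => [|x s IH] H; first by rewrite big_nil; apply: ig0.
rewrite big_cons; apply: igD; first by apply: H; rewrite mem_head.
by apply: IH => y hy; apply: H; rewrite inE hy orbT.
Qed.

Lemma ig_ig P Q f : (forall g, P g -> ideal_gen Q g) -> ideal_gen P f -> ideal_gen Q f.
Proof.
move=> H [l [hl ->]]; apply: igsum => cg /hl /H; exact: igM.
Qed.

Lemma ig_mono P Q f : (forall g, P g -> Q g) -> ideal_gen P f -> ideal_gen Q f.
Proof. by move=> H; apply: ig_ig => g /H; apply: igG. Qed.

Lemma mulcoef p q m : (p * q)@_m != 0 ->
  exists k1 k2, [/\ m = (k1 + k2)%MM, p@_k1 != 0 & q@_k2 != 0].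
Proof.
rewrite -mcoeff_msupp => /msuppM_le /allpairsP [[k1 k2] /= [h1 h2 ->]].
by exists k1, k2; rewrite -!mcoeff_msupp.
Qed.

Lemma ig_supp (Qm : 'X_{1..n} -> Prop) P :
  (forall m k, Qm m -> Qm (k + m)%MM) ->
  (forall g, P g -> forall m, g@_m != 0 -> Qm m) ->
  forall f, ideal_gen P f -> forall m, f@_m != 0 -> Qm m.
Proof.
move=> hup hP f [l [hl ->]] m; elim: l hl => [|cg l IH] hl.
  by rewrite big_nil mcoeff0 eqxx.
rewrite big_cons mcoeffD => hnz.
case: (eqVneq (cg.1 * cg.2)@_m 0) => h.
  by apply: IH; [move=> x hx; apply: hl; rewrite inE hx orbT | move: hnz; rewrite h add0r].
have [k1 [k2 [-> _ h2]]] := mulcoef h.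
by apply: hup; apply: (hP _ (hl _ (mem_head _ _))).
Qed.

Variable (le : rel 'X_{1..n}).
Hypothesis hle : monomial_order le.

Lemma le_refl : reflexive le. Proof. by case: hle => [[]]. Qed.
Lemma le_anti : antisymmetric le. Proof. by case: hle => [[]]. Qed.
Lemma le_trans : transitive le. Proof. by case: hle => [[]]. Qed.
Lemma le_total : total le. Proof. by case: hle => [[]]. Qed.
Lemma le_comp m1 m2 m : le m1 m2 -> le (m1 + m)%MM (m2 + m)%MM.
Proof. by case: hle => _ [H _]; apply: H. Qed.

Lemma le0 k : le 0%MM k.
Proof.
case: (boolP (le 0%MM k)) => // hk; exfalso.
have hk0 : le k 0%MM by case/orP: (le_total k 0%MM) => //; rewrite (negbTE hk).
have kne : k != 0%MM by apply/eqP => e; move: hk; rewrite e le_refl.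
pose a j := iter j (fun x => (x + k)%MM) k.
have hR j : le (a j.+1) (a j) && (a j.+1 != a j).
  have -> : a j.+1 = (a j + k)%MM by [].
  apply/andP; split.
    by have := le_comp (a j) hk0; rewrite add0m [(k + _)%MM]addmC.
  apply/eqP => e; move/eqP: kne; apply; apply: (@addmI _ (a j)).
  by rewrite addm0 e.
have: forall x, Acc (fun a b => le a b && (a != b)) x -> forall j, x <> a j.
  move=> x; elim => {}x _ IH j hx; apply: (IH (a j.+1)) (erefl _).
  rewrite hx; exact: (hR j).
move=> /(_ (a 0)) H; apply: (H _ 0 erefl).
case: hle => _ [_ hwf]; exact: hwf.
Qed.

Lemma le_div u m : (u <= m)%MM -> le u m.
Proof.
move=> h; rewrite -(submK h); have := le_comp u (le0 (m - u)%MM).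
by rewrite add0m addmC.
Qed.

Let F := fun m acc => if le acc m then m else acc.

Lemma foldr_max x t : foldr F x t \in x :: t /\
   forall y, y \in x :: t -> le y (foldr F x t).
Proof.
elim: t => [|y t [IH1 IH2]] /=.
  by split; [rewrite mem_head | move=> y; rewrite inE => /eqP ->; apply: le_refl].
rewrite {1 3}/F; set r := foldr F x t; case: ifP => h; split.
- by rewrite !inE eqxx orbT.
- move=> z; rewrite !inE => /orP [/eqP ->|/orP [/eqP ->|hz]]; first 2 last.
  + by apply: le_trans h; apply: IH2; rewrite inE hz orbT.
  + by apply: le_trans h; apply: IH2; rewrite mem_head.
  + exact: le_refl.
- by move: IH1; rewrite !inE => /orP [->|->]; rewrite ?orbT.
- move=> z; rewrite !inE => /orP [/eqP ->|/orP [/eqP ->|hz]].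
  + by apply: IH2; rewrite mem_head.
  + by case/orP: (le_total r y) => //; rewrite h.
  + by apply: IH2; rewrite inE hz orbT.
Qed.

Lemma lmon_spec f : f != 0 -> lmon le f \in msupp f /\
   forall m, m \in msupp f -> le m (lmon le f).
Proof.
move=> nz; rewrite /lmon; case E: (msupp f) => [|x t] /=.
  by move: nz; rewrite (mpolyE f) E big_nil eqxx.
exact: foldr_max.
Qed.

Lemma lmon_coef f : f != 0 -> f@_(lmon le f) != 0.
Proof. by move/lmon_spec => [h _]; rewrite -mcoeff_msupp. Qed.

Lemma lmon_max f m : f@_m != 0 -> le m (lmon le f).
Proof.
move=> h; have nz : f != 0 by apply: contraNneq h => ->; rewrite mcoeff0.
by apply: (lmon_spec nz).2; rewrite mcoeff_msupp.
Qed.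

Lemma lmon_uniq f u : f@_u != 0 -> (forall m, f@_m != 0 -> le m u) -> lmon le f = u.
Proof.
move=> hu H; have nz : f != 0 by apply: contraNneq hu => ->; rewrite mcoeff0.
apply: le_anti; rewrite (lmon_max hu) andbT; apply: H; exact: lmon_coef.
Qed.

Lemma lmonX m : lmon le ('X_[m] : {mpoly K[n]}) = m.
Proof. by rewrite /lmon msuppX. Qed.

Lemma lead_mono P m : lead_ideal le P 'X_[m] ->
  exists f, [/\ P f, f != 0 & (lmon le f <= m)%MM].
Proof.
move=> H.
have := @ig_supp (fun m => exists f, [/\ P f, f != 0 & (lmon le f <= m)%MM])
  (fun u => exists f, P f /\ f != 0 /\ u = 'X_[lmon le f]).
apply.
- move=> m0 k [f [hf nz hl]]; exists f; split => //.
  by apply: lepm_trans hl _; apply: lem_addl.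
- move=> g [f [hf [nz ->]]] m0; rewrite mcoeffX; case: (@eqP _ (lmon le f) m0) => [<- _|_]; last by rewrite mulr0n eqxx.
  by exists f; split => //; apply: lepm_refl.
- exact: H.
- by rewrite mcoeffX eqxx oner_eq0.
Qed.

Lemma lead_gen P f m : P f -> f != 0 -> (lmon le f <= m)%MM -> lead_ideal le P 'X_[m].
Proof.
move=> hf nz hl; rewrite -(submK hl) mpolyXD; apply: igM; apply: igG.
by exists f.
Qed.

Lemma GRL I G1 g h : reduced_groebner_basis le I G1 -> G1 g -> I h ->
  (forall m, h@_m != 0 -> g@_m != 0) -> h@_(lmon le g) = 0 -> h = 0.
Proof.
move=> [[_ hGI hlead] _ hred] hg hh hsupp hlg.
apply/eqP; case: (eqVneq h 0) => // nz; exfalso.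
set u := lmon le h.
have hu : h@_u != 0 by apply: lmon_coef.
have gu : g@_u != 0 by apply: hsupp.
have : init_ideal le I 'X_[u] by apply: igG; exists h.
move/hlead/lead_mono => [g' [hg' nz' hl]].
case: (eqVneq g' g) => e.
  subst g'; have e1 : lmon le g = u.
    by apply: le_anti; rewrite (le_div hl) lmon_max.
  by move: hu; rewrite -e1 hlg eqxx.
apply: (hred g hg u); first by rewrite mcoeff_msupp.
by apply: (lead_gen (f := g')) => //; split => //; apply/eqP.
Qed.

End Gen.

Lemma eq_le_deg n (u m : 'X_{1..n}) : (u <= m)%MM -> (mdeg m <= mdeg u)%N -> u = m.
Proof.
move=> h hd; have e : mdeg (m - u)%MM = 0%N.
  by move: hd; rewrite -{1}(submK h) mdegD; case: (mdeg _) => // k; rewrite addSn ltnNge leq_addl.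
by move/eqP: e; rewrite mdeg_eq0 => /eqP e; rewrite -(submK h) e add0m.
Qed.

Section Graph.
Variables (K : fieldType) (d : nat) (E : rel 'I_d).
Local Notation n := (nvar E).
Local Notation PP := {mpoly K[nvar E]}.
Implicit Types (f g h : PP) (m a c : 'X_{1..n}).

Definition sv (i : 'I_n) : {set 'I_d} := val (enum_val i : stset E).
Definition cnt m (v : 'I_d) : nat := (\sum_(i < n) m i * (v \in sv i))%N.
Definition sqf m : bool := [forall v, cnt m v <= 1]%N.

Lemma cntD m1 m2 v : cnt (m1 + m2)%MM v = (cnt m1 v + cnt m2 v)%N.
Proof. by rewrite /cnt -big_split; apply: eq_bigr => i _; rewrite mnmDE mulnDl. Qed.

Lemma cntU r v : cnt U_(r)%MM v = (v \in sv r).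
Proof.
rewrite /cnt (bigD1 r) //= mnm1E eqxx mul1n big1 ?addn0 // => i /negbTE.
by rewrite mnm1E eq_sym => ->.
Qed.

Lemma svK (S : stset E) : sv (enum_rank S) = val S.
Proof. by rewrite /sv enum_rankK. Qed.

Lemma nsqf_up m k : ~~ sqf m -> ~~ sqf (k + m)%MM.
Proof.
move/forallPn => [v hv]; apply/forallPn; exists v; rewrite cntD -ltnNge.
rewrite -ltnNge in hv; exact: leq_trans hv (leq_addl _ _).
Qed.

Lemma sqf_down u m : (u <= m)%MM -> sqf m -> sqf u.
Proof.
move=> h; apply: contraTT => hu; rewrite -(submK h); exact: nsqf_up.
Qed.

Lemma cnt_pos m v : (0 < cnt m v)%N -> exists i, (0 < m i)%N /\ v \in sv i.
Proof.
move=> h; case: (boolP [exists i, (0 < m i)%N && (v \in sv i)]).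
  by move/existsP => [i /andP [h1 h2]]; exists i.
move/existsPn => H; move: h; rewrite /cnt big1 // => i _.
move: (H i); rewrite negb_and -leqNgt leqn0 => /orP [/eqP->|/negbTE->].
  by rewrite mul0n.
by rewrite muln0.
Qed.

Lemma nsqf_pair m : ~~ sqf m -> exists i j v,
   [/\ v \in sv i, v \in sv j & (U_(i) + U_(j) <= m)%MM].
Proof.
move/forallPn => [v]; rewrite -ltnNge => h2.
have [i [hi vi]] := cnt_pos (ltnW h2).
have hUi : (U_(i) <= m)%MM.
  by apply/mnm_lepP => j; rewrite mnm1E; case: eqP => [<-|_].
have hm : m = ((m - U_(i)) + U_(i))%MM by rewrite submK.
have h1 : (0 < cnt (m - U_(i))%MM v)%N.
  by move: h2; rewrite {1}hm cntD cntU vi addn1 ltnS.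
have [j [hj vj]] := cnt_pos h1.
exists i, j, v; split => //; rewrite hm [X in (_ <= X)%MM]addmC.
apply/mnm_lepP => k; rewrite !mnmDE leq_add2l mnm1E.
by case: eqP => [<-|_].
Qed.

Lemma Xpair (S T : stset E) :
  xS K S * xS K T = 'X_[U_(enum_rank S) + U_(enum_rank T)].
Proof. by rewrite /xS mpolyXD. Qed.

Lemma mpolyX_neq0 a : ('X_[a] : PP) != 0.
Proof.
apply/eqP => e; have := congr1 (mcoeff a) e.
by rewrite mcoeffX eqxx mcoeff0 => /eqP; rewrite oner_eq0.
Qed.

Lemma Mgen_form f : M_gens K E f -> exists a, [/\ f = 'X_[a], ~~ sqf a & mdeg a = 2%N].
Proof.
move=> [S [T [hST ->]]]; rewrite Xpair; eexists; split; first by [].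
  move/set0Pn: hST => [v]; rewrite inE => /andP [vS vT].
  apply/forallPn; exists v; rewrite cntD !cntU !svK vS vT //.
by rewrite mdegD !mdeg1.
Qed.

Lemma disj_cnt (A B : {set 'I_d}) v : A :&: B = set0 ->
  ((v \in A) + (v \in B))%N = (v \in A :|: B) :> nat.
Proof.
move=> h; rewrite in_setU; case: (boolP (v \in A)) => hA; case: (boolP (v \in B)) => hB //.
have : v \in A :&: B by rewrite inE hA hB.
by rewrite h inE.
Qed.

Lemma Jgen_form f : J_gens K E f -> exists a c,
  [/\ f = 'X_[a] - 'X_[c], (forall v, cnt a v = cnt c v), mdeg a = 2%N & mdeg c = 2%N].
Proof.
move=> [S1 [S2 [S3 [S4 [h12 h34 hU ->]]]]]; rewrite !Xpair.
do 2 eexists; split; first by [].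
- by move=> v; rewrite !cntD !cntU !svK disj_cnt // disj_cnt // hU.
- by rewrite mdegD !mdeg1.
- by rewrite mdegD !mdeg1.
Qed.

Definition pP f : PP := \sum_(m <- msupp f | sqf m) f@_m *: 'X_[m].

Lemma pPE f m : (pP f)@_m = if sqf m then f@_m else 0.
Proof.
rewrite /pP raddf_sum /= big_mkcond /=.
under eq_bigr => k _ do rewrite mcoeffZ mcoeffX.
case: (boolP (m \in msupp f)) => hm.
  rewrite (bigD1_seq m) ?msupp_uniq //= eqxx mulr1 big1 ?addr0 // => k hk.
  by rewrite (negbTE hk) /= mulr0n mulr0 if_same.
rewrite big1_seq; last first.
  move=> k /= hk; have hk' : (k == m) = false.
    by apply/negbTE; apply: contraNneq hm => <-.
  by rewrite hk' /= mulr0n mulr0 if_same.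
by move: hm; rewrite -mcoeff_eq0 => /eqP ->; rewrite if_same.
Qed.

Lemma pPD f g : pP (f + g) = pP f + pP g.
Proof. by apply/mpolyP => m; rewrite mcoeffD !pPE mcoeffD; case: ifP; rewrite ?addr0. Qed.

Lemma pPZ (x : K) f : pP (x *: f) = x *: pP f.
Proof. by apply/mpolyP => m; rewrite mcoeffZ !pPE mcoeffZ; case: ifP; rewrite ?mulr0. Qed.

Lemma pP0 : pP 0 = 0.
Proof. by apply/mpolyP => m; rewrite pPE mcoeff0 if_same. Qed.

Lemma pPsum (T : eqType) (s : seq T) (F : T -> PP) :
  pP (\sum_(x <- s) F x) = \sum_(x <- s) pP (F x).
Proof.
elim: s => [|x s IH]; first by rewrite !big_nil pP0.
by rewrite !big_cons pPD IH.
Qed.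

Lemma pPXb k a c : (forall v, cnt a v = cnt c v) ->
  pP ('X_[k] * ('X_[a] - 'X_[c])) =
  if sqf (k + a)%MM then 'X_[k] * ('X_[a] - 'X_[c]) else 0.
Proof.
move=> H; have sqfeq : sqf (k + a)%MM = sqf (k + c)%MM.
  by rewrite /sqf; apply: eq_forallb => v; rewrite !cntD H.
rewrite mulrBr -!mpolyXD; apply/mpolyP => m; rewrite pPE.
case: (boolP (sqf (k + a)%MM)) => hs; case: (boolP (sqf m)) => hm //.
- rewrite mcoeffB !mcoeffX.
  have /negbTE-> : (k + a)%MM != m by apply/eqP => e; move: hm; rewrite -e hs.
  have /negbTE-> : (k + c)%MM != m by apply/eqP => e; move: hm; rewrite -e -sqfeq hs.
  by rewrite /= subrr.
- rewrite mcoeffB !mcoeffX.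
  have /negbTE-> : (k + a)%MM != m by apply/eqP => e; move: hs; rewrite e hm.
  have /negbTE-> : (k + c)%MM != m by apply/eqP => e; move: hs; rewrite sqfeq e hm.
  by rewrite /= subrr mcoeff0.
- by rewrite mcoeff0.
Qed.

Lemma J_pP f : J_G K E f -> J_G K E (pP f).
Proof.
move=> [l [hl ->]]; rewrite pPsum; apply: igsum => cg /hl hcg.
have [a [c [eb hac _ _]]] := Jgen_form hcg.
rewrite {1}(mpolyE cg.1) mulr_suml pPsum; apply: igsum => k _.
rewrite -scalerAl pPZ eb pPXb // -eb; case: ifP => _.
  by rewrite scalerAl; apply: igM; apply: igG.
by rewrite scaler0; apply: ig0.
Qed.

Lemma J_deg f : J_G K E f -> forall m, f@_m != 0 -> (2 <= mdeg m)%N.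
Proof.
apply: (@ig_supp _ _ (fun m => (2 <= mdeg m)%N)).
  by move=> m k h; rewrite mdegD; apply: leq_trans h (leq_addl _ _).
move=> g /Jgen_form [a [c [-> _ da dc]]] m.
case: (eqVneq a m) => [<-|ha]; first by rewrite da.
case: (eqVneq c m) => [<-|hc]; first by rewrite dc.
by rewrite mcoeffB !mcoeffX (negbTE ha) (negbTE hc) /= subrr eqxx.
Qed.

Lemma M_nsqf f : M_G K E f -> forall m, f@_m != 0 -> ~~ sqf m.
Proof.
apply: (@ig_supp _ _ (fun m => ~~ sqf m)); first by move=> m k; apply: nsqf_up.
move=> g /Mgen_form [a [-> ha _]] m.
by rewrite mcoeffX; case: (@eqP _ a m) => [<-|_] //; rewrite mulr0n eqxx.
Qed.


Lemma nsqf_gen m : ~~ sqf m -> exists S T : stset E,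
  M_gens K E (xS K S * xS K T) /\ (U_(enum_rank S) + U_(enum_rank T) <= m)%MM.
Proof.
move/nsqf_pair => [i [j [v [vi vj hle]]]].
exists (enum_val i), (enum_val j); rewrite !enum_valK; split => //.
exists (enum_val i), (enum_val j); split => //.
by apply/set0Pn; exists v; rewrite inE; apply/andP.
Qed.

Lemma nsqf_M f : (forall m, f@_m != 0 -> ~~ sqf m) -> M_G K E f.
Proof.
move=> H; rewrite (mpolyE f); apply: igsum => m hm; rewrite -mul_mpolyC; apply: igM.
have hnz : f@_m != 0 by rewrite -mcoeff_msupp.
have [S [T [hST hle]]] := nsqf_gen (H m hnz).
rewrite -(submK hle) mpolyXD -Xpair; apply: igM; exact: igG.
Qed.

End Graph.

Unset Implicit Arguments. Set Strict Implicit.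

Theorem proposition6p4 (K : fieldType) (d : nat) (E : rel 'I_d)
  (hE : simple_graph E) (le : rel 'X_{1..nvar E}) (hle : monomial_order le)
  (G1 : RG K E -> Prop) (hG1 : reduced_groebner_basis le (J_G K E) G1) :
  reduced_groebner_basis le (K_G K E)
    (fun f => (G1 f /\ ~ M_G K E f) \/ M_gens K E f).
Proof.
have [[hfin hGJ hlead] hlc hred] := hG1.
have JK : forall f, J_G K E f -> K_G K E f.
  by move=> f hf; exists f, 0; split => //; split; [apply: ig0 | rewrite addr0].
have MK : forall f, M_G K E f -> K_G K E f.
  by move=> f hf; exists 0, f; split; [apply: ig0 | split => //; rewrite add0r].
have hA : forall g, G1 g -> ~ M_G K E g -> forall m, g@_m != 0 -> sqf m.
  move=> g hg hM.
  have hJg := hGJ g hg.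
  have hJ1 := J_pP hJg.
  have hJ2 := igB hJg hJ1.
  case: (boolP (sqf (lmon le g))) => hs.
    have e : g - pP g = 0.
      apply: (GRL hle hG1 hg hJ2).
        by move=> m; rewrite mcoeffB pPE; case: ifP => _; rewrite ?subrr ?eqxx ?subr0.
      by rewrite mcoeffB pPE hs subrr.
    move=> m hm; case: (boolP (sqf m)) => // hn; exfalso.
    have := congr1 (mcoeff m) e; rewrite mcoeffB pPE (negbTE hn) subr0 mcoeff0.
    by move/eqP; rewrite (negbTE hm).
  have e : pP g = 0.
    apply: (GRL hle hG1 hg hJ1).
      by move=> m; rewrite pPE; case: ifP => _; rewrite ?eqxx.
    by rewrite pPE (negbTE hs).
  exfalso; apply: hM; apply: nsqf_M => m hm.
  case: (boolP (sqf m)) => // hs'; exfalso.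
  have := congr1 (mcoeff m) e; rewrite pPE hs' mcoeff0.
  by move/eqP; rewrite (negbTE hm).
have MiffN : forall g, M_G K E g <-> all (fun m => ~~ sqf m) (msupp g).
  move=> g; split.
    by move=> hM; apply/allP => m; rewrite mcoeff_msupp; apply: M_nsqf.
  by move/allP => H; apply: nsqf_M => m; rewrite -mcoeff_msupp; apply: H.
split; [split | |].
-
  have [s1 hs1] := hfin.
  exists ([seq g <- s1 | ~~ all (fun m => ~~ sqf m) (msupp g)] ++
          map (fun p => xS K p.1 * xS K p.2)
            (filter (fun p : stset E * stset E => val p.1 :&: val p.2 != set0)
               (enum {: stset E * stset E}))).
  move=> f; rewrite mem_cat mem_filter; split.
    case => [[h1 h2]|[S [T [hST ->]]]].
      apply/orP; left; apply/andP; split; last by apply/hs1.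
      by apply/negP => /MiffN.
    apply/orP; right; apply/mapP; exists (S, T) => //.
    by rewrite mem_filter mem_enum hST.
  case/orP => [/andP [h1 h2]|/mapP [[S T]]].
    left; split; first by apply/hs1.
    by move/MiffN; apply/negP.
  rewrite mem_filter => /andP [hST _] ->; right; exists S, T; split => //.
- move=> g [[hg _]|hg]; first by apply: JK; apply: hGJ.
  by apply: MK; apply: igG.
- move=> f; split.
    apply: ig_mono => u [h [hGh [nz ->]]]; exists h; split; last by split.
    case: hGh => [[hg _]|hg]; first by apply: JK; apply: hGJ.
    by apply: MK; apply: igG.
  apply: ig_ig => u [f' [hK [nz ->]]].
  set m := lmon le f'.
  have hfm : f'@_m != 0 by apply: lmon_coef.
  case: (boolP (sqf m)) => hs.
    have [j [k [hj [hk ef]]]] := hK.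
    have hpk : pP k = 0.
      apply/mpolyP => m'; rewrite pPE mcoeff0; case: ifP => // hs'.
      case: (eqVneq k@_m' 0) => [->//|hnz]; by have := M_nsqf hk hnz; rewrite hs'.
    have ep : pP f' = pP j by rewrite ef pPD hpk addr0.
    have hJp : J_G K E (pP f') by rewrite ep; apply: J_pP.
    have hpm : (pP f')@_m != 0 by rewrite pPE hs.
    have hpnz : pP f' != 0 by apply: contraNneq hpm => ->; rewrite mcoeff0.
    have elm : lmon le (pP f') = m.
      apply: (lmon_uniq hle hpm) => m' hm'; apply: (lmon_max hle).
      by move: hm'; rewrite pPE; case: ifP => //; rewrite eqxx.
    have : init_ideal le (J_G K E) 'X_[m].
      by apply: igG; exists (pP f'); split => //; split => //; rewrite elm.
    move/hlead/lead_mono => [g [hg gnz hgl]].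
    apply: (lead_gen (f := g)) => //; left; split => // hM.
    have := M_nsqf hM (lmon_coef hle gnz).
    by rewrite (sqf_down hgl hs).
  have [S [T [hST hle2]]] := nsqf_gen K hs.
  apply: (lead_gen (f := xS K S * xS K T)) => //; first by right.
    by rewrite Xpair mpolyX_neq0.
  by rewrite Xpair lmonX.
- move=> g [[hg _]|hg]; first by apply: hlc.
  have [a [-> _ _]] := Mgen_form hg.
  by rewrite /lcoef lmonX mcoeffX eqxx.
- move=> g hg m hm H.
  have [h [[hGh hne] hnz hl]] := lead_mono H.
  case: hg => [[hg1 hgM]|hgM2].
    have hsm : sqf m by apply: (hA g hg1 hgM); rewrite -mcoeff_msupp.
    case: hGh => [[hh1 hhM]|hhM2].
      apply: (hred g hg1 m hm); apply: (lead_gen (f := h)) => //.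
    have [b [eb hb _]] := Mgen_form hhM2.
    move: hl; rewrite eb lmonX => hl.
    by move: hb; rewrite (sqf_down hl hsm).
  have [a [ea ha da]] := Mgen_form hgM2.
  move: hm; rewrite ea msuppX mem_seq1 => /eqP em; subst m.
  case: hGh => [[hh1 hhM]|hhM2].
    have hs : sqf (lmon le h) by apply: (hA h hh1 hhM); apply: lmon_coef.
    have hd := J_deg (hGJ h hh1) (lmon_coef hle hnz).
    have e : lmon le h = a by apply: (eq_le_deg hl); rewrite da.
    by move: ha; rewrite -e hs.
  have [b [eb hb db]] := Mgen_form hhM2.
  move: hl; rewrite eb lmonX => hl.
  have e : b = a by apply: (eq_le_deg hl); rewrite da db.
  by apply: hne; rewrite eb ea e.
Qed.
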